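(* Let $A=\sum_{i\ge0}A_iz^{i-k}dz\in\mathfrak{g}((z))dz$ with $k>1$ and $A_0\ne0$, and suppose $A_0,\dots,A_{k-2}$ all lie in some torus (abelian subalgebra of semisimple elements) $\mathfrak{t}\subset\mathfrak{g}$. Set $H_i=\bigcap_{j=0}^{k-i-2}\{h\in G:\mathrm{Ad}_hA_j=A_j\}$ for $i=0,\dots,k-2$, $H_{k-1}=G$, and $\mathfrak{h}_i=\mathrm{Lie}\,H_i$. Then there exists a unique $(k-1)$-tuple $(\hat g^{(1)},\dots,\hat g^{(k-1)})$ with $\hat g^{(l)}=\prod_{i=1}^\infty\exp(z^iX^{(l)}_i)\in H_{k-l}(\mathbb{C}[[z]])$ (the ordered product $\lim_{j\to\infty}\exp(z^jX^{(l)}_j)\cdots\exp(zX^{(l)}_1)$), $X^{(l)}_i\in\mathrm{range}(\mathrm{ad}_{A_{l-1}}|_{\mathfrak{h}_{k-l}})$, such that for each $l\ge1$, $A^{(l)}=\sum_{i\ge0}A^{(l)}_iz^{i-k}dz:=\hat g^{(l)}\cdots\hat g^{(1)}[A]$ satisfies $A^{(l)}_i=A_i$ for $i=0,\dots,k-2$ and $A^{(l)}\in\mathfrak{h}_{k-l-1}((z))dz$.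
   Context: $G$ is a connected complex reductive group with Lie algebra $\mathfrak{g}$; $z$ is a formal variable. For $g\in G(\mathbb{C}((z)))$ the gauge action is $g[A]=gAg^{-1}+dg\,g^{-1}$ (in any faithful representation). For $l=k-1$ the condition $A^{(k-1)}\in\mathfrak{h}_0((z))dz$ uses $\mathfrak{h}_0$ as defined. *)

(* Defs.v *)
From HB Require Import structures.
From mathcomp Require Import all_boot all_order all_algebra.
From mathcomp Require Import complex reals.
Set Implicit Arguments. Unset Strict Implicit. Unset Printing Implicit Defensive.
Import Order.TTheory GRing.Theory Num.Theory.
Local Open Scope ring_scope.


Section Defs.
Variables (R : realType) (n : nat).
Local Notation C := (R[i]).
Local Notation M := ('M[C]_n).

Definition lie (X Y : M) : M := X *m Y - Y *m X.

Definition lie_subalgebra (g : M -> Prop) : Prop :=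
  [/\ g 0,
      (forall X Y, g X -> g Y -> g (X + Y)),
      (forall (c : C) X, g X -> g (c *: X)) &
      (forall X Y, g X -> g Y -> g (lie X Y))].

(* g acts completely reducibly on C^n (row vectors, v |-> v *m X):
   every g-stable subspace has a g-stable complement.  For the Lie algebra
   of a reductive group in a faithful representation this holds. *)
Definition g_stable (g : M -> Prop) (U : M) : Prop :=
  forall X, g X -> (U *m X <= U)%MS.
Definition completely_reducible (g : M -> Prop) : Prop :=
  forall U : M, g_stable g U ->
    exists W : M, [/\ g_stable g W, (U :&: W == (0 : M))%MS & (U + W == 1%:M)%MS].

Definition semisimple (X : M) : Prop := diagonalizable X.

Definition torus (g t : M -> Prop) : Prop :=
  [/\ lie_subalgebra t,
      (forall X, t X -> g X),
      (forall X Y, t X -> t Y -> lie X Y = 0) &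
      (forall X, t X -> semisimple X)].

(* h_i = Lie H_i, where H_i = cap_{j=0}^{k-i-2} Stab_G(A_j) (H_{k-1} = G):
   h_i = { Y in g | [Y, A_j] = 0 for 0 <= j <= k-i-2 }
   (the condition j <= k-i-2 is written j + i + 2 <= k to handle i = k-1). *)
Definition hsub (g : M -> Prop) (A : nat -> M) (k i : nat) (Y : M) : Prop :=
  g Y /\ forall j, (j + i + 2 <= k)%N -> lie Y (A j) = 0.

Definition in_ad_range (h : M -> Prop) (B X : M) : Prop :=
  exists Y, h Y /\ X = lie B Y.

(* A power series  sum_{m>=0} g_m z^m  is a  nat -> M.
   A Laurent series  sum_{i>=0} A_i z^{i-k}  (pole order <= k, k fixed)
   is also represented by its coefficient sequence  nat -> M. *)

(* product of power series (also: Laurent (shift k) times power series,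
   and power series times Laurent (shift k), the result having shift k) *)
Definition smul (f g : nat -> M) : nat -> M :=
  fun N => \sum_(i < N.+1) f i *m g (N - i)%N.

Definition sone : nat -> M := fun N => if N == 0%N then 1%:M else 0.

Fixpoint sinv_seq (g : nat -> M) (N : nat) : seq M :=
  match N with
  | 0 => [:: invmx (g 0%N)]
  | N'.+1 => let s := sinv_seq g N' in
      rcons s (- (invmx (g 0%N) *m
          \sum_(i < N'.+1) g i.+1 *m nth 0 s (N' - i)%N))
  end.
Definition sinv (g : nat -> M) : nat -> M := fun N => nth 0 (sinv_seq g N) N.

(* d g / dz, as a Laurent series with shift k:
   coefficient of z^{i-k} is (i-k+1) g_{i-k+1} if i >= k, else 0 *)
Definition sderiv_shift (k : nat) (g : nat -> M) : nat -> M :=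
  fun i => if (k <= i)%N then ((i - k).+1)%:R *: g (i - k).+1 else 0.

(* gauge action  g[A] = g A g^-1 + (dg/dz) g^-1  (A Laurent with shift k) *)
Definition gauge (k : nat) (g A : nat -> M) : nat -> M :=
  fun i => smul (smul g A) (sinv g) i + smul (sderiv_shift k g) (sinv g) i.

(* exp(z^i X) as a power series (i >= 1):
   coefficient of z^m is X^(m/i)/(m/i)! if i | m, else 0 *)
Definition sexp (i : nat) (X : M) : nat -> M :=
  fun m => if (i %| m)%N then ((m %/ i)`!%:R)^-1 *: (X ^+ (m %/ i))%R else 0.

Fixpoint ordprod_fin (X : nat -> M) (j : nat) : nat -> M :=
  match j with
  | 0 => sone
  | j'.+1 => smul (sexp j'.+1 (X j'.+1)) (ordprod_fin X j')
  end.

(* g = lim_{j -> oo} exp(z^j X_j) ... exp(z X_1)  (z-adic limit: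
   each coefficient is eventually constant and equal to that of g) *)
Definition is_ordprod (X : nat -> M) (g : nat -> M) : Prop :=
  forall N, exists J, forall j, (J <= j)%N -> ordprod_fin X j N = g N.

Fixpoint lprod (gh : nat -> nat -> M) (l : nat) : nat -> M :=
  match l with
  | 0 => sone
  | l'.+1 => smul (gh l'.+1) (lprod gh l')
  end.

End Defs.

Definition good_tuple (R : realType) (n : nat) (g : 'M[R[i]]_n -> Prop)
    (A : nat -> 'M[R[i]]_n) (k : nat) (gh : nat -> nat -> 'M[R[i]]_n) : Prop :=
  forall l, (1 <= l <= k.-1)%N ->
    [/\
        (exists X : nat -> 'M[R[i]]_n,
            (forall i, (1 <= i)%N -> in_ad_range (hsub g A k (k - l)) (A l.-1) (X i))
            /\ is_ordprod X (gh l)),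
        (* ghat_l stabilises A_j for j <= l-2 (part of ghat_l in H_{k-l}(C[[z]])) *)
        (forall j m, (j + 2 <= l)%N -> gh l m *m A j = A j *m gh l m),
        (forall i, (i <= k - 2)%N -> gauge k (lprod gh l) A i = A i) &
        (forall i, hsub g A k (k - l).-1 (gauge k (lprod gh l) A i))].

(* Main.v *)
Require Import Defs.
From HB Require Import structures.
From mathcomp Require Import all_boot all_order all_algebra.
From mathcomp Require Import complex reals.
From mathcomp Require Import ring zify.
From Stdlib Require Import FunctionalExtensionality IndefiniteDescription.
Import Order.TTheory GRing.Theory Num.Theory.
Local Open Scope ring_scope.

Module Helpers.
Set Implicit Arguments. Unset Strict Implicit. Unset Printing Implicit Defensive.



Section Diag.
Variables (R : realType) (n : nat).
Local Notation C := (R[i]).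
Local Notation M := ('M[C]_n).

Lemma lieDr (a U V : M) : lie a (U + V) = lie a U + lie a V.
Proof. rewrite /lie mulmxDl mulmxDr; by rewrite addrACA opprD. Qed.
Lemma lieZr (a U : M) (c : C) : lie a (c *: U) = c *: lie a U.
Proof. by rewrite /lie scalerBr -scalemxAl -scalemxAr. Qed.
Lemma lie0r (a : M) : lie a 0 = 0.
Proof. by rewrite /lie mul0mx mulmx0 subrr. Qed.
Lemma lieNr (a U : M) : lie a (- U) = - lie a U.
Proof. by rewrite /lie mulmxN mulNmx opprB opprK addrC. Qed.
Lemma lieBr (a U V : M) : lie a (U - V) = lie a U - lie a V.
Proof. by rewrite lieDr lieNr. Qed.
Lemma lieDl (a U V : M) : lie (U + V) a = lie U a + lie V a.
Proof. rewrite /lie mulmxDl mulmxDr; by rewrite addrACA opprD. Qed.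
Lemma lieZl (a U : M) (c : C) : lie (c *: U) a = c *: lie U a.
Proof. by rewrite /lie scalerBr -scalemxAl -scalemxAr. Qed.
Lemma lieN (a U : M) : lie U a = - lie a U.
Proof. by rewrite /lie opprB. Qed.
Lemma lie_sumr (a : M) I (r : seq I) (P : pred I) (F : I -> M) :
  lie a (\sum_(i <- r | P i) F i) = \sum_(i <- r | P i) lie a (F i).
Proof. exact: (big_morph _ (lieDr a) (lie0r a)). Qed.

Fixpoint Op (a : M) (cs : seq C) (Y : M) : M :=
  match cs with [::] => Y | c :: cs' => Op a cs' Y - c^-1 *: lie a (Op a cs' Y) end.
Fixpoint Zop (a : M) (cs : seq C) (Y : M) : M :=
  match cs with [::] => 0 | c :: cs' => Zop a cs' Y + c^-1 *: Op a cs' Y end.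

Lemma Op_dec a cs Y : Y = Op a cs Y + lie a (Zop a cs Y).
Proof.
elim: cs => [|c cs IH] /=; first by rewrite lie0r addr0.
rewrite lieDr lieZr {1}IH; set u := lie a (Op a cs Y).
by rewrite addrACA addNr addr0.
Qed.

Lemma OpD a cs U V : Op a cs (U + V) = Op a cs U + Op a cs V.
Proof.
elim: cs => [|c cs IH] //=; rewrite IH lieDr scalerDr opprD.
by rewrite addrACA.
Qed.
Lemma Op0 a cs : Op a cs 0 = 0.
Proof. by elim: cs => [|c cs IH] //=; rewrite IH lie0r scaler0 subrr. Qed.
Lemma Op_lie a cs U : Op a cs (lie a U) = lie a (Op a cs U).
Proof. elim: cs => [|c cs IH] //=; by rewrite IH [RHS]lieBr lieZr. Qed.

Lemma Op_sum a cs I (r : seq I) (Pr : pred I) (F : I -> M) :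
  Op a cs (\sum_(i <- r | Pr i) F i) = \sum_(i <- r | Pr i) Op a cs (F i).
Proof. exact: (big_morph _ (OpD a cs) (Op0 a cs)). Qed.

Lemma Op_eigen a cs W (lam : C) : lie a W = lam *: W ->
  Op a cs W = (\prod_(c <- cs) (1 - c^-1 * lam)) *: W.
Proof.
move=> HW; elim: cs => [|c cs IH] /=; first by rewrite big_nil scale1r.
rewrite IH lieZr HW big_cons scalerA scalerA -scalerBl; congr (_ *: _).
by ring. Qed.

Lemma Op_closed (h : M -> Prop) a cs Y :
  h 0 -> (forall U V, h U -> h V -> h (U + V)) -> (forall (c : C) U, h U -> h (c *: U)) ->
  (forall U, h U -> h (lie a U)) -> h Y -> h (Op a cs Y) /\ h (Zop a cs Y).
Proof.
move=> h0 hD hZ hL hY; elim: cs => [|c cs [IH1 IH2]] //=; split.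
  by apply: hD => //; rewrite -scaleN1r scalerA; apply: hZ; apply: hL.
by apply: hD => //; apply: hZ.
Qed.

Lemma lie_eig (A' Ei Ej Y : M) (di dj : C) : A' *m Ei = di *: Ei ->
  Ej *m A' = dj *: Ej -> lie A' (Ei *m Y *m Ej) = (di - dj) *: (Ei *m Y *m Ej).
Proof.
move=> h1 h2; rewrite /lie !mulmxA h1 -(mulmxA (Ei *m Y)) h2.
by rewrite -scalemxAl -scalemxAl -scalemxAr scalerBl.
Qed.

Lemma diag_key (a : M) : diagonalizable a ->
  exists cs, forall Y, lie a (Op a cs Y) = 0.
Proof.
case=> P Pu /(diagonalizable_forLR Pu) [d ->]; rewrite mxpoly.conjVmx //.
set Q := invmx P.
have PQ : P *m Q = 1%:M by rewrite mulmxV.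
pose e (i : 'I_n) := Q *m delta_mx i i *m P.
have esum : \sum_i e i = 1%:M.
  by rewrite /e -mulmx_suml -mulmx_sumr -mx1_sum_delta mulmx1 mulVmx.
have dE i : diag_mx d *m delta_mx i i = d 0 i *: delta_mx i i.
  apply/matrixP=> r s; rewrite mul_diag_mx !mxE.
  by case: (eqVneq r i) => [->|]; rewrite ?mulr0 //=.
have Ed i : delta_mx i i *m diag_mx d = d 0 i *: delta_mx i i.
  apply/matrixP=> r s; rewrite mul_mx_diag !mxE mulrC.
  case: (s =P i) => [->|ne] //.
  by rewrite andbF !mulr0.
have ae i : Q *m diag_mx d *m P *m e i = d 0 i *: e i.
  by rewrite /e !mulmxA -(mulmxA _ P Q) PQ mulmx1 -(mulmxA Q) dE -scalemxAr -scalemxAl.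
have ea i : e i *m (Q *m diag_mx d *m P) = d 0 i *: e i.
  by rewrite /e !mulmxA -(mulmxA _ P Q) PQ mulmx1 -(mulmxA Q (delta_mx i i)) Ed -scalemxAr -scalemxAl.
set A' := Q *m diag_mx d *m P in ae ea *.
clearbody e A'.
exists [seq d 0 i - d 0 j | i <- enum 'I_n, j <- enum 'I_n] => Y.
have -> : Y = \sum_i \sum_j (e i *m Y *m e j).
  by under eq_bigr do rewrite -mulmx_sumr esum mulmx1; rewrite -mulmx_suml esum mul1mx.
rewrite Op_sum lie_sumr big1 // => i _.
rewrite Op_sum lie_sumr big1 // => j _.
have Hl : lie A' (e i *m Y *m e j) = (d 0 i - d 0 j) *: (e i *m Y *m e j).
  exact: lie_eig (ae i) (ea j).
rewrite (Op_eigen _ Hl) lieZr Hl scalerA.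
case: (eqVneq (d 0 i - d 0 j) 0) => [->|nz]; first by rewrite mulr0 scale0r.
rewrite (big_rem (d 0 i - d 0 j)) /=; last first.
  by apply/allpairsP; exists (i, j); rewrite !mem_enum.
by rewrite mulVf // subrr mul0r mul0r scale0r.
Qed.

Lemma ker_im (a : M) cs W U : (forall Y, lie a (Op a cs Y) = 0) ->
  lie a W = 0 -> W = lie a U -> W = 0.
Proof.
move=> Hcs HW WU.
have -> : W = Op a cs W by elim: (cs) => [|c cs' IH] //=; rewrite -IH HW scaler0 subr0.
by rewrite WU Op_lie Hcs.
Qed.

End Diag.

Section Ser.
Variables (R : realType) (n' : nat).
Local Notation n := n'.+1.
Local Notation C := (R[i]).
Local Notation M := ('M[C]_n).
Implicit Types f g h G D E B : nat -> M.
Local Notation sone := (@sone R n).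

Lemma tri (F : nat -> nat -> M) K :
  \sum_(a < K.+1) \sum_(b < (K - a)%N.+1) F a b =
  \sum_(p < K.+1) \sum_(a < p.+1) F a (p - a)%N.
Proof.
elim: K => [|K IH]; first by rewrite !big_ord1.
rewrite big_ord_recr /= [RHS]big_ord_recr /= subnn big_ord1.
have E1 : \sum_(a < K.+1) \sum_(b < (K.+1 - a)%N.+1) F a b =
   \sum_(a < K.+1) (\sum_(b < (K - a)%N.+1) F a b + F a (K.+1 - a)%N).
  apply: eq_bigr => a _; rewrite subSn; last by rewrite -ltnS.
  by rewrite big_ord_recr /=.
rewrite E1 big_split /= IH.
by rewrite -addrA [in RHS](big_ord_recr K.+1) /= subnn.
Qed.


Definition sadd f g : nat -> M := fun i => f i + g i.
Definition szero : nat -> M := fun _ => 0.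
Definition zk (k : nat) : nat -> M := fun i => if i == k then 1%:M else 0.
Definition sD f : nat -> M := fun m => (m.+1)%:R *: f m.+1.
Definition sh (k : nat) f : nat -> M := fun i => if (k <= i)%N then f (i - k)%N else 0.

Lemma saddC f g : sadd f g = sadd g f.
Proof. by apply: functional_extensionality => i; rewrite /sadd addrC. Qed.
Lemma saddA f g h : sadd f (sadd g h) = sadd (sadd f g) h.
Proof. by apply: functional_extensionality => i; rewrite /sadd addrA. Qed.
Lemma sadd0 f : sadd f szero = f.
Proof. by apply: functional_extensionality => i; rewrite /sadd addr0. Qed.

Lemma smulA f g h : smul (smul f g) h = smul f (smul g h).
Proof.
apply: functional_extensionality => N; symmetry; rewrite /smul.
under eq_bigr => j _ do rewrite mulmx_sumr.
rewrite (tri (fun a b => f a *m (g b *m h (N - a - b)%N))).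
apply: eq_bigr => p _; rewrite mulmx_suml; apply: eq_bigr => a _.
rewrite mulmxA; congr (_ *m h _).
have := ltn_ord a; have := ltn_ord p; lia.
Qed.

Lemma smul1s f : smul sone f = f.
Proof.
apply: functional_extensionality => N; rewrite /smul big_ord_recl /= /sone eqxx.
by rewrite mul1mx subn0 big1 ?addr0 // => i _; rewrite mul0mx.
Qed.

Lemma smuls1 f : smul f sone = f.
Proof.
apply: functional_extensionality => N; rewrite /smul big_ord_recr /= /sone subnn eqxx.
rewrite mulmx1 big1 ?add0r // => i _.
by rewrite subn_eq0 leqNgt ltn_ord /= mulmx0.
Qed.

Lemma smulDl f g h : smul (sadd f g) h = sadd (smul f h) (smul g h).
Proof.
apply: functional_extensionality => N; rewrite /smul /sadd -big_split.
by apply: eq_bigr => i _; rewrite mulmxDl.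
Qed.

Lemma smulDr f g h : smul f (sadd g h) = sadd (smul f g) (smul f h).
Proof.
apply: functional_extensionality => N; rewrite /smul /sadd -big_split.
by apply: eq_bigr => i _; rewrite mulmxDr.
Qed.

Lemma smuls0 f : smul f szero = szero.
Proof.
apply: functional_extensionality => N; rewrite /smul big1 // => i _.
by rewrite mulmx0.
Qed.

Lemma smul0 f g : smul f g 0%N = f 0%N *m g 0%N.
Proof. by rewrite /smul big_ord1. Qed.

Lemma sinv_seq_size g N : size (sinv_seq g N) = N.+1.
Proof. by elim: N => //= N IH; rewrite size_rcons IH. Qed.

Lemma sinv_seq_nth g N j : (j <= N)%N -> nth 0 (sinv_seq g N) j = sinv g j.
Proof.
elim: N j => [|N IH] j le; first by case: j le.
rewrite /= nth_rcons sinv_seq_size.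
case: ltngtP le => // [lt _|-> _]; first exact: IH.
by rewrite /sinv /= nth_rcons sinv_seq_size ltnn eqxx.
Qed.

Lemma sinvS g N : sinv g N.+1 =
  - (invmx (g 0%N) *m \sum_(i < N.+1) g i.+1 *m sinv g (N - i)%N).
Proof.
rewrite /sinv /= nth_rcons sinv_seq_size ltnn eqxx.
congr (- (_ *m _)); apply: eq_bigr => i _.
by rewrite sinv_seq_nth // leq_subr.
Qed.

Lemma smul_sinv g : g 0%N \in unitmx -> smul g (sinv g) = sone.
Proof.
move=> gu; apply: functional_extensionality => -[|N].
  by rewrite /smul big_ord1 /sinv /= mulmxV.
rewrite /smul big_ord_recl /= subn0 sinvS mulmxN mulmxA mulmxV // mul1mx.
rewrite /sone /=; apply/eqP; rewrite addrC subr_eq0; apply/eqP.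
by apply: eq_bigr => i _; rewrite subSS.
Qed.

Lemma sinv0 g : sinv g 0%N = invmx (g 0%N).
Proof. by []. Qed.

Lemma sinv_smul g : g 0%N \in unitmx -> smul (sinv g) g = sone.
Proof.
move=> gu; set h := sinv g.
have hu : h 0%N \in unitmx by rewrite /h sinv0 unitmx_inv.
have e1 := smul_sinv hu.
suff -> : g = sinv h by [].
by rewrite -[g]smuls1 -e1 -smulA smul_sinv // smul1s.
Qed.

Lemma sinv_uniq u v : u 0%N \in unitmx -> smul u v = sone -> smul v u = sone ->
  sinv u = v.
Proof.
move=> uu e1 e2.
by rewrite -[sinv u]smul1s -e2 smulA smul_sinv // smuls1.
Qed.

Lemma smul_cancel f g G : G 0%N \in unitmx -> smul f G = smul g G -> f = g.
Proof.
move=> Gu e; rewrite -[f]smuls1 -[g]smuls1 -(smul_sinv Gu) -!smulA.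
by rewrite e.
Qed.

Lemma sum_if_eq (F : nat -> M) k i :
  \sum_(j < i.+1) (if j == k :> nat then F j else 0) = if (k <= i)%N then F k else 0.
Proof. by rewrite -big_mkcond /= big_ord1_eq ltnS. Qed.

Lemma zkl k f : smul (zk k) f = sh k f.
Proof.
apply: functional_extensionality => i; rewrite /smul /zk /sh.
rewrite (eq_bigr (fun j : 'I_i.+1 => if j == k :> nat then f (i - k)%N else 0)).
  by rewrite (sum_if_eq (fun _ => f (i - k)%N)).
move=> j _; case: eqP => [->|_]; by rewrite ?mul1mx ?mul0mx.
Qed.

Lemma sum_rev (F : nat -> M) N :
  \sum_(j < N) F j = \sum_(j < N) F (N - j.+1)%N.
Proof. by rewrite (reindex_inj rev_ord_inj). Qed.

Lemma smul_rev f g i : smul f g i = \sum_(j < i.+1) f (i - j)%N *m g j.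
Proof.
rewrite /smul (sum_rev (fun j => f j *m g (i - j)%N)) /=.
apply: eq_bigr => j _; rewrite subSS subKn //.
by have := ltn_ord j.
Qed.

Lemma zkr k f : smul f (zk k) = sh k f.
Proof.
apply: functional_extensionality => i; rewrite smul_rev /zk /sh.
rewrite (eq_bigr (fun j : 'I_i.+1 => if j == k :> nat then f (i - k)%N else 0)).
  by rewrite (sum_if_eq (fun _ => f (i - k)%N)).
move=> j _; case: eqP => [->|_]; by rewrite ?mulmx1 ?mulmx0.
Qed.

Lemma zk_comm k f : smul (zk k) f = smul f (zk k).
Proof. by rewrite zkl zkr. Qed.

Lemma sderivE k g : sderiv_shift k g = smul (zk k) (sD g).
Proof.
rewrite zkl; apply: functional_extensionality => i.
by rewrite /sderiv_shift /sh /sD.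
Qed.

Lemma sD_smul f g : sD (smul f g) = sadd (smul (sD f) g) (smul f (sD g)).
Proof.
apply: functional_extensionality => m; rewrite /sD /sadd /smul.
rewrite scaler_sumr.
rewrite (eq_bigr (fun i : 'I_m.+2 => i%:R *: (f i *m g (m.+1 - i)%N) +
   (m.+1 - i)%N%:R *: (f i *m g (m.+1 - i)%N))); last first.
  move=> i _; rewrite -scalerDl -natrD subnKC //.
  by have := ltn_ord i.
rewrite big_split /=; congr (_ + _).
  rewrite big_ord_recl /= scale0r add0r; apply: eq_bigr => i _.
  by rewrite /bump /= add1n subSS scalemxAl.
rewrite big_ord_recr /= subnn scale0r addr0; apply: eq_bigr => i _.
have := ltn_ord i; rewrite ltnS => le.
by rewrite subSn // scalemxAr.
Qed.


Lemma gaugeE k G D : gauge k G D =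
  sadd (smul (smul G D) (sinv G)) (smul (smul (zk k) (sD G)) (sinv G)).
Proof. by apply: functional_extensionality => i; rewrite /gauge /sadd sderivE. Qed.

Lemma gauge_char k G D : G 0%N \in unitmx ->
  smul (gauge k G D) G = sadd (smul G D) (smul (zk k) (sD G)).
Proof. by move=> Gu; rewrite gaugeE smulDl !smulA sinv_smul // !smuls1. Qed.

Lemma gauge_unique k G D B : G 0%N \in unitmx ->
  smul B G = sadd (smul G D) (smul (zk k) (sD G)) -> B = gauge k G D.
Proof. by move=> Gu e; apply: (smul_cancel Gu); rewrite gauge_char. Qed.

Lemma zk_mid k E Y : smul E (smul (zk k) Y) = smul (zk k) (smul E Y).
Proof. by rewrite -smulA -zk_comm smulA. Qed.

Lemma gauge_comp k E G D : E 0%N \in unitmx -> G 0%N \in unitmx ->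
  gauge k (smul E G) D = gauge k E (gauge k G D).
Proof.
move=> Eu Gu; have EGu : smul E G 0%N \in unitmx by rewrite smul0 unitmx_mul Eu Gu.
symmetry; apply: gauge_unique => //.
rewrite -smulA gauge_char // smulDl smulA gauge_char // smulDr sD_smul smulDr.
rewrite !smulA zk_mid -!saddA; congr sadd.
by rewrite saddC.
Qed.

Lemma sD_one : sD sone = szero.
Proof. by apply: functional_extensionality => m; rewrite /sD /sone /= scaler0. Qed.

Lemma gauge_one k D : gauge k sone D = D.
Proof.
symmetry; apply: gauge_unique; first by rewrite /sone /= unitmx1.
by rewrite smuls1 smul1s sD_one smuls0 sadd0.
Qed.

Definition ef (p : nat) : C := (p`!%:R)^-1.
Definition adn (X : M) (p : nat) (Y : M) : M := iter p (lie X) Y.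

Lemma efS q : q.+1%:R * ef q.+1 = ef q.
Proof.
rewrite /ef factS natrM invfM mulrA divff ?mul1r //.
by rewrite pnatr_eq0.
Qed.

Lemma sum_div m i (T : nat -> M) : (0 < m)%N ->
  \sum_(j < i.+1) (if (m %| j)%N then T j else 0) = \sum_(s < (i %/ m).+1) T (m * s)%N.
Proof.
move=> m0; elim: i => [|i IH]; first by rewrite div0n !big_ord1 dvdn0 muln0.
rewrite big_ord_recr /= IH (divnS _ m0).
case: (boolP (m %| i.+1)%N) => h /=; last by rewrite addr0.
rewrite add1n [RHS]big_ord_recr /=; congr (_ + T _).
by rewrite -[LHS](divnK h) (divnS _ m0) h add1n mulnC.
Qed.

Lemma smul_sexp_l m (X : M) (F : nat -> M) i : (0 < m)%N -> smul (sexp m X) F i =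
  \sum_(s < (i %/ m).+1) (ef s *: X ^+ s) *m F (i - m * s)%N.
Proof.
move=> m0; rewrite /smul /sexp.
rewrite (eq_bigr (fun j : 'I_i.+1 => if (m %| j)%N then
   (ef (j %/ m) *: X ^+ (j %/ m)) *m F (i - j)%N else 0)); last first.
  by move=> j _; case: ifP => //; rewrite mul0mx.
rewrite (@sum_div m i (fun j => (ef (j %/ m) *: X ^+ (j %/ m)) *m F (i - j)%N)) //.
by apply: eq_bigr => s _; rewrite mulKn.
Qed.

Lemma smul_sexp_r m (X : M) (F : nat -> M) i : (0 < m)%N -> smul F (sexp m X) i =
  \sum_(s < (i %/ m).+1) F (i - m * s)%N *m (ef s *: X ^+ s).
Proof.
move=> m0; rewrite smul_rev /sexp.
rewrite (eq_bigr (fun j : 'I_i.+1 => if (m %| j)%N then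
   F (i - j)%N *m (ef (j %/ m) *: X ^+ (j %/ m)) else 0)); last first.
  by move=> j _; case: ifP => //; rewrite mulmx0.
rewrite (@sum_div m i (fun j => F (i - j)%N *m (ef (j %/ m) *: X ^+ (j %/ m)))) //.
by apply: eq_bigr => s _; rewrite mulKn.
Qed.


Definition Tsum (X Y : M) p : M :=
  \sum_(a < p.+1) (ef a * ef (p - a)%N) *: (X ^+ a * Y * (- X) ^+ (p - a)%N).

Lemma ef0 : ef 0 = 1.
Proof. by rewrite /ef fact0 invr1. Qed.

Lemma TsumS (X Y : M) p :
  p.+1%:R *: Tsum X Y p.+1 = X * Tsum X Y p - Tsum X Y p * X.
Proof.
rewrite /Tsum scaler_sumr.
rewrite (eq_bigr (fun a : 'I_p.+2 =>
   (a%:R * ef a * ef (p.+1 - a)%N) *: (X ^+ a * Y * (- X) ^+ (p.+1 - a)%N) +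
   ((p.+1 - a)%N%:R * ef a * ef (p.+1 - a)%N) *: (X ^+ a * Y * (- X) ^+ (p.+1 - a)%N)));
  last first.
  move=> a _; rewrite scalerA -scalerDl; congr (_ *: _).
  rewrite -!mulrA -mulrDl -natrD subnKC //.
  by have := ltn_ord a.
rewrite big_split /=; congr (_ + _).
  rewrite big_ord_recl /= mul0r mul0r scale0r add0r mulr_sumr.
  apply: eq_bigr => b _; rewrite /bump /= add1n subSS efS.
  by rewrite -scalerAr exprS !mulrA.
rewrite big_ord_recr /= subnn mul0r mul0r scale0r addr0 mulr_suml -sumrN.
apply: eq_bigr => a _.
have := ltn_ord a; rewrite ltnS => le.
rewrite subSn // mulrAC efS [ef (p - a)%N * _]mulrC exprSr.
by rewrite !mulrA scalerAl mulrN.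
Qed.

Lemma Tsum_adn (X Y : M) p : Tsum X Y p = ef p *: adn X p Y.
Proof.
elim: p => [|p IH].
  by rewrite /Tsum big_ord1 /= subnn ef0 mulr1 !expr0 mulr1 mul1r.
have nz : p.+1%:R != 0 :> C by rewrite pnatr_eq0.
have -> : Tsum X Y p.+1 = (p.+1%:R)^-1 *: (p.+1%:R *: Tsum X Y p.+1).
  by rewrite scalerA mulVf // scale1r.
rewrite TsumS IH -scalerAr -scalerAl -scalerBr scalerA.
rewrite /adn iterS /lie !mulmxE; congr (_ *: _).
by rewrite -efS mulrA mulVf // mul1r.
Qed.

Lemma Wlem (X Y : M) p :
  \sum_(a < p.+1) (ef a *: X ^+ a) *m Y *m (ef (p - a)%N *: (- X) ^+ (p - a)%N)
  = ef p *: adn X p Y.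
Proof.
rewrite -Tsum_adn /Tsum; apply: eq_bigr => a _.
by rewrite !mulmxE -!scalerAl -scalerAr scalerA.
Qed.


Lemma sexp0 m (X : M) : sexp m X 0%N = 1%:M.
Proof. by rewrite /sexp dvdn0 div0n fact0 invr1 scale1r expr0. Qed.

Lemma sexp_sub m (X : M) i s : (0 < m)%N -> (s <= i %/ m)%N ->
  sexp m X (i - m * s)%N =
  if (m %| i)%N then ef (i %/ m - s)%N *: X ^+ (i %/ m - s)%N else 0.
Proof.
move=> m0 le; have le' : (m * s <= i)%N by rewrite mulnC -leq_divRL.
have d : (m %| i - m * s)%N = (m %| i)%N.
  by rewrite -[in RHS](subnK le') dvdn_addl // dvdn_mulr.
rewrite /sexp d; case: ifP => // _.
by rewrite mulnC divnBMl.
Qed.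

Lemma adn0 (X : M) p : adn X p 0 = 0.
Proof.
elim: p => // p IH; rewrite /adn iterS -/(adn X p 0) IH /lie.
by rewrite mulmx0 mul0mx subrr.
Qed.

Lemma adn1 (X : M) p : adn X p.+1 1%:M = 0.
Proof.
rewrite /adn iterSr /lie mulmx1 mul1mx subrr.
exact: adn0.
Qed.

Lemma sexp_inv m (X : M) : (0 < m)%N -> smul (sexp m X) (sexp m (- X)) = sone.
Proof.
move=> m0; apply: functional_extensionality => i; rewrite smul_sexp_l //.
rewrite (eq_bigr (fun s : 'I_(i %/ m).+1 => if (m %| i)%N then
  (ef s *: X ^+ s) *m 1%:M *m (ef (i %/ m - s)%N *: (- X) ^+ (i %/ m - s)%N) else 0));
  last first.
  move=> s _; rewrite sexp_sub //; last by have := ltn_ord s.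
  by case: ifP; rewrite ?mulmx1 ?mulmx0.
case: (boolP (m %| i)%N) => h; last first.
  rewrite big1 // /sone; case: eqP => // i0; move: h; by rewrite i0 dvdn0.
rewrite Wlem /sone; case: (i %/ m)%N (divnK h) => [|K] iE.
  by rewrite mul0n in iE; rewrite -iE /= ef0 scale1r.
by rewrite adn1 scaler0 -iE mulSn; case: m m0 {h iE}.
Qed.


Lemma sexp_conj m (X : M) D i : (0 < m)%N ->
  smul (smul (sexp m X) D) (sexp m (- X)) i =
  \sum_(p < (i %/ m).+1) ef p *: adn X p (D (i - m * p)%N).
Proof.
move=> m0; rewrite smul_sexp_r //.
set K := (i %/ m)%N.
rewrite (eq_bigr (fun a : 'I_K.+1 => \sum_(b < (K - a)%N.+1)
   (ef b *: X ^+ b) *m D (i - m * (b + a))%N *m (ef a *: (- X) ^+ a))); last first.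
  move=> a _; rewrite smul_sexp_l // mulnC divnBMl mulmx_suml.
  apply: eq_bigr => b _; congr (_ *m D _ *m _).
  by rewrite mulnDr addnC subnDA mulnC.
rewrite (tri (fun a b => (ef b *: X ^+ b) *m D (i - m * (b + a))%N *m (ef a *: (- X) ^+ a))).
apply: eq_bigr => p _.
rewrite (sum_rev (fun a => (ef (p - a)%N *: X ^+ (p - a)%N) *m D (i - m * (p - a + a))%N
   *m (ef a *: (- X) ^+ a))) /=.
rewrite -Wlem; apply: eq_bigr => a _.
have := ltn_ord a; rewrite ltnS => le.
by rewrite subSS subKn // subnKC.
Qed.

Definition dm m (X : M) : nat -> M := fun q => if q == m.-1 then m%:R *: X else 0.

Lemma sD_sexp m (X : M) : (0 < m)%N -> sD (sexp m X) = smul (dm m X) (sexp m X).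
Proof.
move=> m0; apply: functional_extensionality => q.
rewrite /smul /dm.
rewrite (eq_bigr (fun j : 'I_q.+1 => if j == m.-1 :> nat then
   (m%:R *: X) *m sexp m X (q - m.-1)%N else 0)); last first.
  by move=> j _; case: eqP => [->|_] //; rewrite mul0mx.
rewrite (sum_if_eq (fun _ => (m%:R *: X) *m sexp m X (q - m.-1)%N)).
case: leqP => hm; last first.
  rewrite /sD /sexp; case: ifP => [h|_]; last by rewrite scaler0.
  have := dvdn_leq (ltn0Sn q) h; move: hm; case: m m0 {h} => // m _ /=; lia.
have le1 : (1 <= q.+1 %/ m)%N by rewrite leq_divRL // mul1n; move: hm; case: m m0 => //.
have -> : (q - m.-1)%N = (q.+1 - m * 1)%N by rewrite muln1; case: m m0 {hm le1} => //.
rewrite sexp_sub // /sD /sexp; case: ifP => h; last by rewrite scaler0 mulmx0.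
case: (q.+1 %/ m)%N (divnK h) le1 => [//|t] qE _.
rewrite subn1 /= -[in LHS]qE -/(ef t.+1) scalerA natrM.
rewrite -scalemxAl -scalemxAr scalerA mulmxE -exprS; congr (_ *: _).
by rewrite mulrAC efS mulrC.
Qed.

Lemma sinv_sexp m (X : M) : (0 < m)%N -> sinv (sexp m X) = sexp m (- X).
Proof.
move=> m0; apply: sinv_uniq; first by rewrite sexp0 unitmx1.
  exact: sexp_inv.
by rewrite -{2}(opprK X) sexp_inv.
Qed.

Lemma gauge_sexp k m (X : M) D i : (0 < m)%N ->
  gauge k (sexp m X) D i =
  \sum_(p < (i %/ m).+1) ef p *: adn X p (D (i - m * p)%N) + sh k (dm m X) i.
Proof.
move=> m0; rewrite gaugeE /sadd sinv_sexp // sexp_conj //; congr (_ + _).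
by rewrite sD_sexp // smulA smulA sexp_inv // smuls1 zkl.
Qed.

End Ser.




Section Ser2.
Variables (R : realType) (n' : nat).
Local Notation n := n'.+1.
Local Notation C := (R[i]).
Local Notation M := ('M[C]_n).
Implicit Types f g h G D E B : nat -> M.
Local Notation sone := (@sone R n).

Definition agree N f g := forall i, (i <= N)%N -> f i = g i.

Lemma smul_loc N f f' g g' : agree N f f' -> agree N g g' -> smul f g N = smul f' g' N.
Proof.
move=> hf hg; rewrite /smul; apply: eq_bigr => i _.
have := ltn_ord i; rewrite ltnS => le.
by rewrite hf // hg // leq_subr.
Qed.

Lemma agree_le N N' f g : (N' <= N)%N -> agree N f g -> agree N' f g.
Proof. by move=> le h i le'; apply: h; apply: leq_trans le. Qed.

Lemma smul_agree N f f' g g' : agree N f f' -> agree N g g' -> agree N (smul f g) (smul f' g').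
Proof. by move=> hf hg i le; apply: smul_loc; apply: agree_le hf || apply: agree_le hg. Qed.

Lemma sinv_agree N g g' : agree N g g' -> agree N (sinv g) (sinv g').
Proof.
elim: N => [|N IH] h i le.
  by move: le; rewrite leqn0 => /eqP ->; rewrite !sinv0 h.
case: (leqP i N) => [le'|lt]; first by apply: IH => //; apply: agree_le h.
have -> : i = N.+1 by apply/eqP; rewrite eqn_leq le lt.
rewrite !sinvS h //; congr (- (_ *m _)); apply: eq_bigr => j _.
have := ltn_ord j; rewrite ltnS => lej.
rewrite h ?ltnS // IH ?leq_subr //; exact: agree_le h.
Qed.

Lemma gauge_loc k G G' D N : (0 < k)%N -> agree N G G' -> gauge k G D N = gauge k G' D N.
Proof.
move=> k0 h; rewrite /gauge; congr (_ + _).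
  apply: smul_loc; last exact: sinv_agree.
  by apply: smul_agree => // i _.
apply: smul_loc; last exact: sinv_agree.
move=> i le; rewrite /sderiv_shift; case: ifP => // ki.
rewrite h //. lia.
Qed.


Lemma ordprod0 (X : nat -> M) J : ordprod_fin X J 0%N = 1%:M.
Proof. by elim: J => [|J IH] //=; rewrite smul0 sexp0 IH mulmx1. Qed.

Lemma ordprod_step (X : nat -> M) J i : (i <= J)%N ->
  ordprod_fin X J.+1 i = ordprod_fin X J i.
Proof.
move=> le; rewrite /= smul_sexp_l // divn_small ?ltnS // big_ord1.
by rewrite ef0 scale1r expr0 mul1mx muln0 subn0.
Qed.

Lemma ordprod_stable (X : nat -> M) J J' i : (J <= J')%N -> (i <= J)%N ->
  ordprod_fin X J' i = ordprod_fin X J i.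
Proof.
move=> le1 le2; elim: J' le1 => [|J' IH]; first by rewrite leqn0 => /eqP ->.
rewrite leq_eqVlt => /orP [/eqP <-//|]; rewrite ltnS => le.
by rewrite ordprod_step ?IH //; apply: leq_trans le.
Qed.

Lemma ordprod_ext (X X' : nat -> M) J : (forall j, (1 <= j <= J)%N -> X j = X' j) ->
  ordprod_fin X J = ordprod_fin X' J.
Proof.
elim: J => [|J IH] h //=; rewrite h ?leqnn // IH // => j /andP [j1 j2].
by apply: h; rewrite j1 ltnW.
Qed.

Definition glim (X : nat -> M) : nat -> M := fun m => ordprod_fin X m m.

Lemma glim_ordprod (X : nat -> M) : is_ordprod X (glim X).
Proof. by move=> N; exists N => j le; rewrite /glim (ordprod_stable _ le). Qed.

Lemma ordprod_glim (X : nat -> M) G : is_ordprod X G -> G = glim X.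
Proof.
move=> h; apply: functional_extensionality => N; have [J HJ] := h N.
rewrite -(HJ (maxn J N)) ?leq_maxl // /glim (ordprod_stable _ (leq_maxr J N)) //.
Qed.

Lemma glim_agree (X : nat -> M) N : agree N (glim X) (ordprod_fin X N).
Proof. by move=> i le; rewrite /glim (ordprod_stable _ le). Qed.

Lemma glim0 (X : nat -> M) : glim X 0%N = 1%:M.
Proof. exact: ordprod0. Qed.

Lemma sum_closed (hQ : M -> Prop) I (r : seq I) (F : I -> M) :
  hQ 0 -> (forall U V, hQ U -> hQ V -> hQ (U + V)) ->
  (forall i, hQ (F i)) -> hQ (\sum_(i <- r) F i).
Proof. by move=> h0 hD hF; elim/big_ind: _ => //. Qed.

Lemma adn_closed (hQ : M -> Prop) (X Y : M) p :
  (forall U, hQ U -> hQ (lie X U)) -> hQ Y -> hQ (adn X p Y).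
Proof. by move=> hL hY; elim: p => //= p IH; apply: hL. Qed.

Lemma gauge_sexp_closed (hQ : M -> Prop) k m (X : M) D : (0 < m)%N ->
  hQ 0 -> (forall U V, hQ U -> hQ V -> hQ (U + V)) -> (forall (c : C) U, hQ U -> hQ (c *: U)) ->
  (forall U, hQ U -> hQ (lie X U)) -> hQ X -> (forall j, hQ (D j)) ->
  forall i, hQ (gauge k (sexp m X) D i).
Proof.
move=> m0 h0 hD hZ hL hX hDj i; rewrite gauge_sexp //; apply: (hD).
  apply: sum_closed => // p; apply: (hZ); exact: adn_closed.
rewrite /sh /dm; case: ifP => // _; case: ifP => // _; exact: hZ.
Qed.

Lemma gauge_sexp_low k m L (X : M) D i : (0 < m)%N -> (L.+1 < k)%N ->
  (forall j, (j < L)%N -> lie X (D j) = 0) -> (i <= m + L)%N ->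
  gauge k (sexp m X) D i = D i + (if i == (m + L)%N then lie X (D L) else 0).
Proof.
move=> m0 Lk hlow le; rewrite gauge_sexp //.
have -> : sh k (dm m X) i = 0.
  rewrite /sh /dm; case: ifP => // ki; case: eqP => // e.
  by move: m0 Lk le ki e; lia.
rewrite addr0 big_ord_recl /= ef0 scale1r muln0 subn0; congr (_ + _).
have hm : (m * (i %/ m) <= i)%N by rewrite mulnC leq_divM.
case E: (i %/ m)%N hm => [|K] hm.
  rewrite big_ord0; case: eqP => // e.
  have : (0 < i %/ m)%N by rewrite divn_gt0 // e leq_addr.
  by rewrite E.
rewrite big_ord_recl /= big1 ?addr0; last first.
  move=> p _; rewrite /bump /= !add1n.
  have hp : (m * p.+2 <= i)%N.
    apply: leq_trans hm; rewrite leq_mul2l ltnS; apply/orP; right; exact: ltn_ord.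
  have h2 : (2 * m <= m * p.+2)%N by rewrite mulnC leq_mul2l; apply/orP; right.
  rewrite add0n -iterS -iterS iterSr hlow; last by move: hp h2 le m0; lia.
  by rewrite -/(adn X p.+1 0) adn0 scaler0.
have hm1 : (m <= i)%N by move: hm; rewrite mulnS; lia.
rewrite /bump /= /ef /= invr1 scale1r muln1.
case: eqP => [->|ne]; first by rewrite addKn.
by rewrite hlow //; move: ne hm1 le; lia.
Qed.

End Ser2.




Section Lie.
Variables (R : realType) (n' : nat).
Local Notation n := n'.+1.
Local Notation C := (R[i]).
Local Notation M := ('M[C]_n).

Lemma lie0P (U V : M) : lie U V = 0 <-> U *m V = V *m U.
Proof. by rewrite /lie; split => [/eqP|->]; rewrite ?subr_eq0 ?subrr // => /eqP. Qed.

Lemma lie_lie0 (U V W : M) : lie U W = 0 -> lie V W = 0 -> lie (lie U V) W = 0.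
Proof.
move=> /lie0P hU /lie0P hV; apply/lie0P; rewrite /lie mulmxBl mulmxBr.
by rewrite -!mulmxA hU hV !mulmxA hU hV.
Qed.

Lemma lieDl0 (U V W : M) : lie U W = 0 -> lie V W = 0 -> lie (U + V) W = 0.
Proof. by move=> h1 h2; rewrite lieDl h1 h2 addr0. Qed.

Lemma lieZl0 (c : C) (U W : M) : lie U W = 0 -> lie (c *: U) W = 0.
Proof. by move=> h; rewrite lieZl h scaler0. Qed.

Lemma lie0l (W : M) : lie 0 W = 0.
Proof. by rewrite /lie mul0mx mulmx0 subrr. Qed.

Definition lie_closed (h : M -> Prop) :=
  [/\ h 0, (forall U V, h U -> h V -> h (U + V)), (forall (c : C) U, h U -> h (c *: U)) &
      (forall U V, h U -> h V -> h (lie U V))].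

Lemma hsub_closed (g : M -> Prop) (A : nat -> M) k i :
  lie_subalgebra g -> lie_closed (hsub g A k i).
Proof.
case=> g0 gD gZ gL; split.
- by split => // j _; exact: lie0l.
- by move=> U V [gU hU] [gV hV]; split; [exact: gD | move=> j hj; apply: lieDl0; auto].
- by move=> c U [gU hU]; split; [exact: gZ | move=> j hj; apply: lieZl0; auto].
- by move=> U V [gU hU] [gV hV]; split; [exact: gL | move=> j hj; apply: lie_lie0; auto].
Qed.

Lemma Op_fix (a : M) cs c : lie a c = 0 -> Op a cs c = c.
Proof. by move=> h; elim: cs => [|d cs IH] //=; rewrite IH h scaler0 subr0. Qed.

Lemma fix_step (a : M) cs c : (forall Y, lie a (Op a cs Y) = 0) ->
  c + lie (lie a (Zop a cs (Zop a cs c))) a = Op a cs c.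
Proof.
move=> key; set Z := Zop a cs c; set Z' := Zop a cs Z.
have e1 := Op_dec a cs c; have e2 := Op_dec a cs Z.
have -> : lie a Z' = Z - Op a cs Z by rewrite {1}e2 addrAC subrr add0r.
rewrite lieN lieBr -/Z key subr0.
by rewrite {1}e1 -/Z addrK.
Qed.

Lemma x_zero (a : M) cs c : lie a c = 0 -> lie a (Zop a cs (Zop a cs c)) = 0.
Proof.
move=> h.
have k1 : forall c', lie a c' = 0 -> lie a (Zop a cs c') = 0.
  move=> c' h'; have e := Op_dec a cs c'; rewrite Op_fix // in e.
  by apply: (@addrI _ c'); rewrite addr0 -e.
by apply: (k1); apply: (k1).
Qed.

Lemma lieNl (U V : M) : lie (- U) V = - lie U V.
Proof. by rewrite lieN lieNr opprK -lieN. Qed.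

Lemma lieBl (U V W : M) : lie (U - V) W = lie U W - lie V W.
Proof. by rewrite lieDl lieNl. Qed.

Lemma sexp_zero m : (0 < m)%N -> sexp m (0 : M) = sone R n.
Proof.
move=> m0; apply: functional_extensionality => q; rewrite /sexp /sone.
case: ifP => h; last by case: eqP => // q0; move: h; rewrite q0 dvdn0.
case: (q %/ m)%N (divnK h) => [|s] qE.
  by rewrite mul0n in qE; rewrite -qE /= fact0 invr1 scale1r expr0.
by rewrite expr0n /= scaler0; case: eqP => // q0; move: qE m0; rewrite q0 mulSn; lia.
Qed.

Lemma sexp_comm m (X B : M) q : X *m B = B *m X -> sexp m X q *m B = B *m sexp m X q.
Proof.
move=> h; rewrite /sexp; case: ifP => _; last by rewrite mul0mx mulmx0.
rewrite -scalemxAl -scalemxAr; congr (_ *: _).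
elim: (q %/ m)%N => [|s IH]; first by rewrite expr0 mul1mx mulmx1.
by rewrite exprS -!mulmxE -mulmxA IH !mulmxA h.
Qed.

Lemma smul_comm (f g : nat -> M) (B : M) N :
  (forall i, f i *m B = B *m f i) -> (forall i, g i *m B = B *m g i) ->
  smul f g N *m B = B *m smul f g N.
Proof.
move=> hf hg; rewrite /smul mulmx_suml mulmx_sumr; apply: eq_bigr => i _.
by rewrite -mulmxA hg !mulmxA hf.
Qed.

Lemma ordprod_comm (X : nat -> M) (B : M) J m :
  (forall i, (1 <= i)%N -> X i *m B = B *m X i) ->
  ordprod_fin X J m *m B = B *m ordprod_fin X J m.
Proof.
move=> h; elim: J m => [|J IH] m /=.
  by rewrite /sone; case: eqP => _; rewrite ?mul1mx ?mulmx1 ?mul0mx ?mulmx0.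
by apply: smul_comm => // i; apply: sexp_comm; apply: h.
Qed.

End Lie.




Section Level.
Variables (R : realType) (n' : nat).
Local Notation n := n'.+1.
Local Notation C := (R[i]).
Local Notation M := ('M[C]_n).
Variables (g : M -> Prop) (A : nat -> M) (k L : nat) (cs : seq C) (D : nat -> M).
Local Notation a := (A L).
Local Notation hP := (hsub g A k (k - L.+1)).

Fixpoint Xb (i : nat) : nat -> M :=
  match i with
  | 0 => fun _ => 0
  | i'.+1 => let Xp := Xb i' in
      let c := gauge k (ordprod_fin Xp i') D (i'.+1 + L) in
      fun j => if j == i'.+1 then lie a (Zop a cs (Zop a cs c)) else Xp j
  end.
Definition Xs j := Xb j j.
Definition Cg (X : nat -> M) J := gauge k (ordprod_fin X J) D.
Definition Cj J := Cg Xs J.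

Lemma Xb_stable i j : (j <= i)%N -> Xb i j = Xs j.
Proof.
elim: i j => [|i IH] j le; first by move: le; rewrite leqn0 => /eqP ->.
rewrite /=; case: eqP => [->|ne]; first by rewrite /Xs /= eqxx.
apply: IH; move: le ne; lia.
Qed.

Lemma ordprod_Xb i J : (J <= i)%N -> ordprod_fin (Xb i) J = ordprod_fin Xs J.
Proof.
move=> le; apply: ordprod_ext => j /andP [_ hj]; apply: Xb_stable.
exact: leq_trans le.
Qed.

Lemma XsS i : Xs i.+1 = lie a (Zop a cs (Zop a cs (Cj i (i.+1 + L)))).
Proof. by rewrite {1}/Xs /= eqxx /Cj /Cg ordprod_Xb. Qed.

Lemma CgS (X : nat -> M) J : Cg X J.+1 = gauge k (sexp J.+1 (X J.+1)) (Cg X J).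
Proof. by rewrite /Cg /= gauge_comp // ?sexp0 ?unitmx1 ?ordprod0 ?unitmx1. Qed.

Lemma Cg0 (X : nat -> M) : Cg X 0 = D.
Proof. exact: gauge_one. Qed.

Section Hyps.
Hypotheses (gsub : lie_subalgebra g) (Lk : (L.+1 < k)%N)
  (key : forall Y, lie a (Op a cs Y) = 0) (ha : hP a)
  (hDA : forall i, (i <= k - 2)%N -> D i = A i) (hD : forall i, hP (D i))
  (tor : forall i, (i <= k - 2)%N -> lie (A i) a = 0).

Lemma hP_closed : lie_closed hP.
Proof. exact: hsub_closed. Qed.

Lemma hP_lie_a U : hP U -> hP (lie a U).
Proof. by case: hP_closed => _ _ _ hL; apply: hL. Qed.

Lemma hP_ZZ c : hP c -> hP (Zop a cs (Zop a cs c)).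
Proof.
case: hP_closed => h0 hD' hZ hL hc.
have [_ h1] := Op_closed cs h0 hD' hZ hP_lie_a hc.
by have [_ h2] := Op_closed cs h0 hD' hZ hP_lie_a h1.
Qed.

Lemma hP_low U j : hP U -> (j < L)%N -> lie U (A j) = 0.
Proof. by case=> _ h lt; apply: h; move: Lk lt; lia. Qed.

Lemma gen_low (X : nat -> M) J : (forall i, (1 <= i <= J)%N -> hP (X i)) ->
  forall j, (j <= L)%N -> Cg X J j = A j.
Proof.
elim: J => [|J IH] hX j le; first by rewrite Cg0 hDA //; move: Lk le; lia.
have hX' : forall i, (1 <= i <= J)%N -> hP (X i).
  by move=> i /andP [h1 h2]; apply: hX; rewrite h1 ltnW.
rewrite CgS (gauge_sexp_low (L:=L)) //; last by move: le; lia.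
  rewrite IH //; case: eqP => [e|_]; [move: e le; lia | by rewrite addr0].
move=> j' lt; rewrite IH ?(ltnW lt) //; apply: hP_low => //; apply: hX.
by rewrite leqnn.
Qed.

Lemma gen_step (X : nat -> M) J : (forall i, (1 <= i <= J.+1)%N -> hP (X i)) ->
  forall i, (i <= J.+1 + L)%N ->
  Cg X J.+1 i = Cg X J i + (if i == (J.+1 + L)%N then lie (X J.+1) a else 0).
Proof.
move=> hX i le.
have hX' : forall i, (1 <= i <= J)%N -> hP (X i).
  by move=> i' /andP [h1 h2]; apply: hX; rewrite h1 ltnW.
rewrite CgS (gauge_sexp_low (L:=L)) //.
  by case: eqP => // _; rewrite (gen_low hX' (leqnn L)).
move=> j' lt; rewrite (gen_low hX') ?(ltnW lt) //; apply: hP_low => //; apply: hX.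
by rewrite leqnn.
Qed.

Lemma gen_stable (X : nat -> M) J J' i : (forall i, (1 <= i <= J')%N -> hP (X i)) ->
  (J <= J')%N -> (i <= J + L)%N -> Cg X J' i = Cg X J i.
Proof.
move=> hX le1 le2; elim: J' le1 hX => [|J' IH]; first by rewrite leqn0 => /eqP ->.
rewrite leq_eqVlt => /orP [/eqP <-//|]; rewrite ltnS => le hX.
rewrite gen_step //; last by move: le le2; lia.
case: eqP => [e|_]; [move: e le le2; lia | rewrite addr0 IH //].
by move=> i' /andP [h1 h2]; apply: hX; rewrite h1 ltnW.
Qed.

Lemma level_inv J : [/\ forall i, hP (Cj J i),
  forall i, (i <= k - 2)%N -> Cj J i = A i,
  forall i, (i <= J + L)%N -> lie (Cj J i) a = 0 &
  forall i, (1 <= i <= J)%N -> hP (Xs i)].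
Proof.
elim: J => [|J [I1 I2 I3 I4]].
  rewrite /Cj Cg0; split => // [i le|i]; last by case: i.
  by rewrite hDA ?tor //; move: le Lk; lia.
set c := Cj J (J.+1 + L).
have hx : hP (Xs J.+1) by rewrite XsS; apply: hP_lie_a; apply: hP_ZZ.
have I4' : forall i, (1 <= i <= J.+1)%N -> hP (Xs i).
  move=> i /andP [h1 h2]; case: (eqVneq i J.+1) => [->//|ne].
  by apply: I4; rewrite h1 -ltnS ltn_neqAle ne h2.
case: hP_closed => h0 hD' hZ hL.
case: (leqP (J.+1 + L) (k - 2)) => hle.
  have lc : lie a c = 0 by rewrite /c I2 // lieN tor // oppr0.
  have x0 : Xs J.+1 = 0 by rewrite XsS x_zero.
  have e : Cj J.+1 = Cj J by rewrite /Cj CgS x0 sexp_zero // gauge_one.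
  rewrite e; split => // i le; case: (leqP i (J + L)) => le'; first exact: I3.
  by rewrite I2 ?tor //; move: le le' hle; lia.
have hstep : forall i, (i <= J.+1 + L)%N -> Cj J.+1 i =
    Cj J i + (if i == (J.+1 + L)%N then lie (Xs J.+1) a else 0).
  by move=> i le; rewrite /Cj gen_step.
split => //.
- move=> i; rewrite /Cj CgS; apply: gauge_sexp_closed => //.
  by [move=> U hU; apply: hL | move=> j; apply: I1].
- move=> i le; have le' : (i <= J.+1 + L)%N by move: le hle; lia.
  rewrite hstep //.
  by case: eqP => [e|_]; [move: e le hle; lia | rewrite addr0 I2].
- move=> i le; rewrite hstep //; case: eqP => [e|ne]; last first.
    by rewrite addr0 I3 //; move: le ne; lia.
  by rewrite e -/c XsS -/c fix_step // lieN key oppr0.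
Qed.

Lemma gauge_glim (X : nat -> M) i : gauge k (glim X) D i = Cg X i i.
Proof. by rewrite /Cg; apply: gauge_loc; [move: Lk; lia | exact: glim_agree]. Qed.

Lemma Xs_range i : (1 <= i)%N -> in_ad_range hP a (Xs i).
Proof.
case: i => // i _; rewrite XsS; eexists; split; last by reflexivity.
by apply: hP_ZZ; have [I1 _ _ _] := level_inv i.
Qed.

Lemma level_out :
 [/\ forall i, (1 <= i)%N -> in_ad_range hP a (Xs i),
     forall i, hP (gauge k (glim Xs) D i) /\ lie (gauge k (glim Xs) D i) a = 0,
     forall i, (i <= k - 2)%N -> gauge k (glim Xs) D i = A i,
     forall j m, (j < L)%N -> glim Xs m *m A j = A j *m glim Xs m &
     glim Xs 0%N = 1%:M].
Proof.
split.
- exact: Xs_range.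
- move=> i; rewrite gauge_glim; have [I1 _ I3 _] := level_inv i.
  by split; [apply: I1 | apply: I3; rewrite leq_addr].
- by move=> i le; rewrite gauge_glim; have [_ I2 _ _] := level_inv i; apply: I2.
- move=> j m lt; rewrite /glim; apply: ordprod_comm => i i1.
  have [_ _ _ I4] := level_inv i.
  by apply/lie0P; apply: hP_low => //; apply: I4; rewrite i1 leqnn.
- exact: glim0.
Qed.

Lemma level_unique (X' : nat -> M) :
  (forall i, (1 <= i)%N -> in_ad_range hP a (X' i)) ->
  (forall i, lie (gauge k (glim X') D i) a = 0) -> glim X' = glim Xs.
Proof.
move=> hX' hc.
have hX'P : forall i, (1 <= i)%N -> hP (X' i).
  by move=> i i1; have [Y [hY ->]] := hX' i i1; apply: hP_lie_a.
have eqX : forall i j, (1 <= j <= i)%N -> X' j = Xs j.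
  elim=> [|i IH] j /andP [j1 j2]; first by move: j1 j2; lia.
  case: (eqVneq j i.+1) => [->|ne]; last first.
    by apply: IH; rewrite j1 -ltnS ltn_neqAle ne j2.
  have eo : ordprod_fin X' i = ordprod_fin Xs i by apply: ordprod_ext.
  set q := (i.+1 + L)%N.
  have hXq : forall i', (1 <= i' <= q)%N -> hP (X' i').
    by move=> i' /andP [h1 _]; apply: hX'P.
  have e1 : gauge k (glim X') D q = Cg X' i.+1 q.
    rewrite gauge_glim (@gen_stable X' i.+1 q) //; rewrite /q; lia.
  have e2 : Cg X' i.+1 q = Cg X' i q + lie (X' i.+1) a.
    rewrite gen_step ?eqxx //; move=> i' /andP [h1 _]; exact: hX'P.
  have [_ _ I3 I4] := level_inv i.+1.
  have e3 : Cj i.+1 q = Cj i q + lie (Xs i.+1) a by rewrite /Cj gen_step ?eqxx.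
  have e4 : lie (Cj i.+1 q) a = 0 by apply: I3.
  have e5 : Cg X' i q = Cj i q by rewrite /Cj /Cg eo.
  have h1 := hc q; rewrite e1 e2 e5 in h1; rewrite e3 in e4.
  have hV : lie (lie (X' i.+1 - Xs i.+1) a) a = 0.
    rewrite lieDl in h1; rewrite lieDl in e4; rewrite lieBl lieBl.
    move: h1 e4 => h1 h2.
    apply/eqP; rewrite subr_eq0; apply/eqP; apply: (@addrI _ (lie (Cj i q) a)).
    by rewrite h1 h2.
  have [Y' [_ eY']] := hX' i.+1 isT.
  have [Y [_ eY]] := Xs_range (ltn0Sn i).
  set V := X' i.+1 - Xs i.+1 in hV.
  have Vim : V = lie a (Y' - Y) by rewrite lieBr -eY' -eY.
  have W0 : lie a V = 0.
    apply: (ker_im key _ (erefl (lie a V))).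
    move: hV; rewrite (lieN a V) lieNl => /eqP; rewrite oppr_eq0 => /eqP hV.
    by rewrite lieN hV oppr0.
  have V0 : V = 0 by apply: (ker_im key W0 Vim).
  by apply/eqP; rewrite -subr_eq0 -/V V0.
apply: functional_extensionality => m; rewrite /glim.
by congr (_ _); apply: ordprod_ext => j hj; apply: eqX hj.
Qed.

End Hyps.
End Level.




Section Top.
Variables (R : realType) (n' : nat).
Local Notation n := n'.+1.
Local Notation C := (R[i]).
Local Notation M := ('M[C]_n).
Variables (A : nat -> M) (k : nat) (csf : nat -> seq C).

Fixpoint Dl (l : nat) : nat -> M :=
  match l with
  | 0 => A
  | l'.+1 => gauge k (glim (Xs A k l' (csf l') (Dl l'))) (Dl l')
  end.

Definition ghf (l : nat) : nat -> M :=
  match l with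
  | 0 => sone R n
  | l'.+1 => glim (Xs A k l' (csf l') (Dl l'))
  end.

Lemma lprod_gauge l : lprod ghf l 0%N = 1%:M /\ gauge k (lprod ghf l) A = Dl l.
Proof.
elim: l => [|l [IH1 IH2]] /=; first by split => //; exact: gauge_one.
split; first by rewrite smul0 IH1 glim0 mulmx1.
rewrite gauge_comp ?glim0 ?IH1 ?unitmx1 //; exact: (congr1 (gauge k _) IH2).
Qed.

Lemma lprod_ext (gh gh' : nat -> nat -> M) l :
  (forall j, (1 <= j <= l)%N -> gh j = gh' j) -> lprod gh l = lprod gh' l.
Proof.
elim: l => [|l IH] h //=; rewrite h ?leqnn // IH // => j /andP [j1 j2].
by apply: h; rewrite j1 ltnW.
Qed.

End Top.

Theorem main_succ (R : realType) (n' : nat) (g : 'M[R[i]]_n'.+1 -> Prop)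
    (A : nat -> 'M[R[i]]_n'.+1) (k : nat) :
  lie_subalgebra g -> completely_reducible g ->
  (forall i, g (A i)) ->
  (1 < k)%N -> A 0%N != 0 ->
  (exists t : 'M[R[i]]_n'.+1 -> Prop, torus g t /\ forall i, (i <= k - 2)%N -> t (A i)) ->
  exists gh : nat -> nat -> 'M[R[i]]_n'.+1,
    good_tuple g A k gh /\
    forall gh', good_tuple g A k gh' ->
      forall l, (1 <= l <= k.-1)%N -> gh' l = gh l.
Proof.
move=> gsub _ gA k1 _ [t [[_ tg tcomm tss] tA]].
have tor : forall i j, (i <= k - 2)%N -> (j <= k - 2)%N -> lie (A i) (A j) = 0.
  by move=> i j hi hj; apply: tcomm; apply: tA.
have diag : forall L, exists cs, (L <= k - 2)%N -> forall Y, lie (A L) (Op (A L) cs Y) = 0.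
  move=> L; case: (boolP (L <= k - 2)%N) => h; last by exists [::].
  by have [cs H] := diag_key (tss _ (tA L h)); exists cs.
pose csf L := proj1_sig (constructive_indefinite_description _ (diag L)).
have csfP : forall L, (L <= k - 2)%N -> forall Y, lie (A L) (Op (A L) (csf L) Y) = 0.
  by move=> L; exact: (proj2_sig (constructive_indefinite_description _ (diag L))).
have inv : forall L, (L < k)%N ->
    (forall i, (i <= k - 2)%N -> Dl A k csf L i = A i) /\
    (forall i, hsub g A k (k - L.+1) (Dl A k csf L i)).
  elim=> [|L IH] Lk.
    split => // i; split => // j; move: k1; lia.
  have [IH1 IH2] := IH (ltnW Lk).
  have Lk' : (L.+1 < k)%N by [].
  have ha : hsub g A k (k - L.+1) (A L).
    split => [|j hj]; [exact: gA | apply: tor; move: hj Lk; lia].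
  have [O1 O2 O3 O4 O5] := level_out gsub Lk' (csfP L (ltac:(move: Lk; lia))) ha
     IH1 IH2 (fun i hi => tor i L hi (ltac:(move: Lk; lia))).
  split => // i; have [[g1 h1] h2] := O2 i; split => // j hj.
  case: (ltngtP j L) => jL; last by rewrite jL.
    by apply: h1; move: hj jL Lk; lia.
  by move: hj jL Lk; lia.
exists (ghf A k csf); split.
  move=> l /andP [l1 lk]; case: l l1 lk => // L _ lk.
  have Lk : (L.+1 < k)%N by rewrite -(ltn_predK k1) ltnS.
  have [IH1 IH2] := inv L (ltnW Lk).
  have ha : hsub g A k (k - L.+1) (A L).
    split => [|j hj]; [exact: gA | apply: tor; move: hj Lk; lia].
  have [O1 O2 O3 O4 O5] := level_out gsub Lk (csfP L (ltac:(move: Lk; lia))) ha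
     IH1 IH2 (fun i hi => tor i L hi (ltac:(move: Lk; lia))).
  have [_ eg] := lprod_gauge A k csf L.+1.
  split.
  - by exists (Xs A k L (csf L) (Dl A k csf L)); split => //; exact: glim_ordprod.
  - by move=> j m hj; apply: O4; move: hj; lia.
  - by move=> i hi; rewrite eg; apply: O3.
  - move=> i; rewrite eg; have [[g1 h1] h2] := O2 i; split => // j hj.
    case: (ltngtP j L) => jL; last by rewrite jL.
      by apply: h1; move: hj jL Lk; lia.
    by move: hj jL Lk; lia.
move=> gh' good.
suff : forall l, forall l', (1 <= l' <= l)%N -> (l' <= k.-1)%N -> gh' l' = ghf A k csf l'.
  by move=> H l /andP [l1 l2]; apply: (H l); rewrite ?l1 ?leqnn.
elim=> [|l IH] l' /andP [l1 l2]; first by move: l1 l2; lia.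
case: (eqVneq l' l.+1) => [->|ne] lk; last first.
  by apply: IH => //; rewrite l1 -ltnS ltn_neqAle ne l2.
clear l1 l2.
have Lk : (l.+1 < k)%N by rewrite -(ltn_predK k1) ltnS.
have [IH1 IH2] := inv l (ltnW Lk).
have ha : hsub g A k (k - l.+1) (A l).
  split => [|j hj]; [exact: gA | apply: tor; move: hj Lk; lia].
have [[X' [hX' hord]] _ _ h4] := good l.+1 (ltac:(rewrite /=; move: lk; lia)).
have eL : lprod gh' l = lprod (ghf A k csf) l.
  apply: lprod_ext => j /andP [j1 j2]; apply: IH; rewrite ?j1 //; move: j2 lk; lia.
have [u1 eg] := lprod_gauge A k csf l.
have eG := ordprod_glim hord.
have hc : forall i, lie (gauge k (glim X') (Dl A k csf l) i) (A l) = 0.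
  move=> i; have [_ h] := h4 i.
  rewrite /= gauge_comp ?eG ?glim0 ?unitmx1 ?eL ?u1 ?unitmx1 // eg in h.
  by apply: h; move: Lk; lia.
rewrite eG /=.
exact: (level_unique gsub Lk (csfP l (ltac:(move: Lk; lia))) ha IH1 IH2
   (fun i hi => tor i l hi (ltac:(move: Lk; lia))) hX' hc).
Qed.


End Helpers.
Import Helpers.

Theorem proposition4p2 (R : realType) (n : nat) (g : 'M[R[i]]_n -> Prop)
    (A : nat -> 'M[R[i]]_n) (k : nat) :
  lie_subalgebra g -> completely_reducible g ->
  (forall i, g (A i)) ->
  (1 < k)%N -> A 0%N != 0 ->
  (exists t : 'M[R[i]]_n -> Prop, torus g t /\ forall i, (i <= k - 2)%N -> t (A i)) ->
  exists gh : nat -> nat -> 'M[R[i]]_n,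
    good_tuple g A k gh /\
    forall gh', good_tuple g A k gh' ->
      forall l, (1 <= l <= k.-1)%N -> gh' l = gh l.
Proof.
case: n g A => [|n'] g A.
  move=> _ _ _ _ /eqP H; exfalso; apply: H; exact: flatmx0.
exact: main_succ.
Qed.
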